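(* If $(X_{n})$ is a nondecreasing sequence of subsets of $\mathbb{R}^{N}$, then $\mu_{N}(\overline{B}_{\cup_n X_{n}})=\lim_n \mu_{N}(\overline{B}_{X_{n}})=\sup_n \mu_{N}(\overline{B}_{X_{n}})$.
   Context: $\mu_N$ is $N$-dimensional Lebesgue measure. For nonempty bounded $X\subset\mathbb{R}^N$, $\overline{B}_X$ (the enclosing ball) is the unique closed ball of minimal diameter containing $X$; $\overline{B}_X:=\mathbb{R}^N$ if $X$ is unbounded; $\overline{B}_\emptyset:=\{0\}$. *)

(* Defs.v *)
From HB Require Import structures.
From mathcomp Require Import all_boot all_order all_algebra.
From mathcomp Require Import all_classical all_reals all_analysis.
Set Implicit Arguments. Unset Strict Implicit. Unset Printing Implicit Defensive.
Import Order.TTheory GRing.Theory Num.Theory.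
Local Open Scope classical_set_scope.
Local Open Scope ring_scope.

Section Defs.
Variables (R : realType) (N : nat).
Notation V := 'rV[R]_N.

Definition edist (x y : V) : R :=
  Num.sqrt (\sum_(i < N) (x ord0 i - y ord0 i) ^+ 2).

Definition cball (c : V) (r : R) : set V := [set y | edist c y <= r].

Definition ebounded (X : set V) : Prop :=
  exists M : R, forall x, X x -> edist 0 x <= M.

Definition is_min_ball (X : set V) (B : set V) : Prop :=
  exists c r, 0 <= r /\ B = cball c r /\ X `<=` cball c r /\
    (forall c' r', 0 <= r' -> X `<=` cball c' r' -> r <= r').

Definition enclosing_ball (X : set V) : set V :=
  if pselect (X = set0) is left _ then [set 0]
  else if pselect (ebounded X) is left _ then xget setT (is_min_ball X)
  else setT.

(** Lebesgue (outer) measure on R^N: infimum of total volumes of countable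
    covers by closed boxes [a,b] = prod_i [a_i, b_i]. *)
Definition box (a b : V) : set V :=
  [set x | forall i : 'I_N, a ord0 i <= x ord0 i <= b ord0 i].

Definition box_vol (a b : V) : R :=
  \prod_(i < N) Num.max (b ord0 i - a ord0 i) 0.

Definition lebN (A : set V) : \bar R :=
  ereal_inf [set s | exists a b : nat -> V,
     A `<=` \bigcup_k box (a k) (b k) /\
     s = (\sum_(0 <= k <oo) (box_vol (a k) (b k))%:E)%E].

End Defs.

(* Main.v *)
Require Import Defs.
From HB Require Import structures.
From mathcomp Require Import all_boot all_order all_algebra.
From mathcomp Require Import all_classical all_reals all_analysis.
From mathcomp Require Import ring lra.
Import numFieldNormedType.Exports.
Import Order.TTheory GRing.Theory Num.Theory.
Local Open Scope classical_set_scope.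
Local Open Scope ring_scope.

Section Geo.
Variables (R : realType) (N : nat).
Notation V := 'rV[R]_N.

Definition d2 (x y : V) : R := \sum_(i < N) (x ord0 i - y ord0 i) ^+ 2.

Lemma d2_ge0 (x y : V) : 0 <= d2 x y.
Proof. by apply: sumr_ge0 => i _; exact: sqr_ge0. Qed.

Lemma d2C (x y : V) : d2 x y = d2 y x.
Proof. by apply: eq_bigr => i _; rewrite -sqrrN opprB. Qed.

Lemma coord_le_d2 (x y : V) (i : 'I_N) : (x ord0 i - y ord0 i) ^+ 2 <= d2 x y.
Proof.
rewrite /d2 (bigD1 i) //= lerDl; apply: sumr_ge0 => j _; exact: sqr_ge0.
Qed.

Lemma cballP (c : V) (r : R) (y : V) : cball c r y <-> 0 <= r /\ d2 c y <= r ^+ 2.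
Proof.
rewrite /cball /edist /=; split.
  move=> h; have r0 : 0 <= r by apply: le_trans h; exact: sqrtr_ge0.
  split => //; move: h; rewrite -{1}(ger0_norm r0) -sqrtr_sqr ler_sqrt //.
  exact: sqr_ge0.
move=> [r0 h]; rewrite -[r]ger0_norm // -sqrtr_sqr ler_sqrt //; exact: sqr_ge0.
Qed.

Lemma d2_quasi (x y z : V) : d2 x z <= 2 * d2 x y + 2 * d2 y z.
Proof.
rewrite /d2 !mulr_sumr -big_split /=; apply: ler_sum => i _.
have -> : x ord0 i - z ord0 i = (x ord0 i - y ord0 i) + (y ord0 i - z ord0 i).
  by rewrite addrA subrK.
move: (x ord0 i - y ord0 i) (y ord0 i - z ord0 i) => a b.
have := sqr_ge0 (a - b); rewrite !expr2; nra.
Qed.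

Lemma midpoint_lemma (Y : set V) (c c' : V) (r r' rho0 : R) :
  Y !=set0 -> Y `<=` cball c r -> Y `<=` cball c' r' -> 0 <= rho0 ->
  (forall c'' t, 0 <= t -> Y `<=` cball c'' t -> rho0 <= t) ->
  d2 c c' <= 4 * (Num.max r r' ^+ 2 - rho0 ^+ 2).
Proof.
move=> [y0 Yy0] Yc Yc' rho0_ge0 hmin.
set M := Num.max r r'.
set m : V := 2^-1 *: (c + c').
set T := M ^+ 2 - d2 c c' / 4.
have key y : Y y -> d2 m y <= T.
  move=> Yy; have [r0 hy] := (cballP _ _ _).1 (Yc _ Yy).
  have [r0' hy'] := (cballP _ _ _).1 (Yc' _ Yy).
  have hM : r ^+ 2 <= M ^+ 2 /\ r' ^+ 2 <= M ^+ 2.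
    split; rewrite ler_sqr ?nnegrE //; first by rewrite le_max lexx.
      by rewrite le_max ?r0 ?orbT.
    by rewrite le_max lexx orbT.
    by rewrite le_max ?r0' ?orbT.
  have -> : d2 m y = (d2 c y + d2 c' y) / 2 - d2 c c' / 4.
    have -> : d2 m y = \sum_(i < N) (((c ord0 i - y ord0 i)^+2 +
       (c' ord0 i - y ord0 i)^+2)/2 - (c ord0 i - c' ord0 i)^+2/4).
      by apply: eq_bigr => i _; rewrite !mxE; field.
    rewrite big_split /= sumrN -!mulr_suml big_split /=. done.
  move: hM => [h1 h2]; rewrite /T; lra.
have T0 : 0 <= T by apply: le_trans (key _ Yy0); exact: d2_ge0.
have : rho0 <= Num.sqrt T.
  apply: hmin; first exact: sqrtr_ge0.
  move=> y Yy; apply/cballP; split; first exact: sqrtr_ge0.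
  by rewrite sqr_sqrtr //; exact: key.
rewrite -(ler_sqr (x:=rho0)) ?nnegrE ?sqrtr_ge0 // sqr_sqrtr // /T => h.
lra.
Qed.


Lemma lim_center (Y : set V) (c : nat -> V) (e r : nat -> R) (s : R) :
  e @ \oo --> 0 -> (forall n m, (n <= m)%N -> d2 (c n) (c m) <= e n) ->
  r @ \oo --> s ->
  (forall y, Y y -> \forall n \near \oo, d2 (c n) y <= r n ^+ 2) ->
  exists c0 : V, forall y, Y y -> d2 c0 y <= s ^+ 2.
Proof.
move=> He hc Hr hY.
have cv (i : 'I_N) : cvg ((fun n => c n ord0 i) @ \oo).
  apply/cauchy_cvgP; apply/cauchy_exP => eps eps0.
  have := (cvgrPdist_lt _ _).1 He (eps ^+ 2) (exprn_gt0 2 eps0).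
  move=> [n0 _ Hn0]; exists (c n0 ord0 i) => /=.
  exists n0 => // n /= n0n; rewrite /ball /=.
  have h1 := coord_le_d2 (c n0) (c n) i.
  have h2 := hc _ _ n0n.
  have h3 : e n0 < eps ^+ 2.
    by have := Hn0 n0 (leqnn n0); rewrite /= sub0r normrN; apply: le_lt_trans; exact: ler_norm.
  have : `|c n0 ord0 i - c n ord0 i| ^+ 2 < eps ^+ 2.
    by rewrite real_normK ?num_real //; apply: le_lt_trans h3; exact: le_trans h2.
  by rewrite ltr_pXn2r // ?nnegrE // ltW.
pose c0 : V := \row_i lim ((fun n => c n ord0 i) @ \oo).
exists c0 => y Yy.
have Hd : (fun n => d2 (c n) y) @ \oo --> d2 c0 y.
  rewrite /d2; apply: (@cvg_big _ _ +%R 0 predT) => //.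
    exact: add_continuous.
  move=> i _; rewrite /c0 mxE expr2.
  under eq_fun do rewrite expr2.
  by apply: cvgM; apply: cvgB; [exact: (cv i) | exact: cvg_cst | exact: (cv i) | exact: cvg_cst].
have Hr2 : (fun n => r n ^+ 2) @ \oo --> s ^+ 2.
  rewrite expr2; under eq_fun do rewrite expr2; exact: cvgM.
exact: (ler_cvg_to Hd Hr2 (hY y Yy)).
Qed.


Lemma edist_ge0 (x y : V) : 0 <= Defs.edist x y.
Proof. exact: sqrtr_ge0. Qed.

Lemma harm_cvg : (fun n : nat => (n.+1%:R : R)^-1) @ \oo --> 0.
Proof. exact: (@cvg_harmonic R). Qed.

Lemma min_ball_ex (Y : set V) : Y !=set0 -> ebounded Y ->
  exists c r, 0 <= r /\ Y `<=` cball c r /\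
    (forall c' r', 0 <= r' -> Y `<=` cball c' r' -> r <= r').
Proof.
move=> [y0 Yy0] [M HM].
pose S := [set r : R | 0 <= r /\ exists c, Y `<=` cball c r].
have M0 : 0 <= M by apply: le_trans (HM y0 Yy0); exact: edist_ge0.
have SM : S M by split => //; exists 0 => y Yy; exact: HM.
have lbS : has_lbound S by exists 0 => r [].
have hinf : has_inf S by split => //; exists M.
pose rho := inf S.
have rho0 : 0 <= rho by apply: lb_le_inf; [exists M | move=> r []].
have rho_le c' t : 0 <= t -> Y `<=` cball c' t -> rho <= t.
  by move=> t0 Hc; apply: ge_inf => //; split => //; exists c'.
pose t n := rho + (n.+1%:R : R)^-1.
have t_ge0 n : 0 <= t n by rewrite /t addr_ge0 // invr_ge0.
have : forall n, exists c, Y `<=` cball c (t n).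
  move=> n; have [u [u0 [c Hc]] lt] := @inf_adherent R S (n.+1%:R^-1) ltac:(by rewrite invr_gt0) hinf.
  exists c => y Yy; have [_ h] := (cballP _ _ _).1 (Hc y Yy); apply/cballP; split => //.
  apply: le_trans h _; rewrite ler_sqr ?nnegrE //; exact: ltW.
move=> /choice [cf Hcf].
have Ht : t @ \oo --> rho.
  rewrite -[rho]addr0; apply: cvgD; [exact: cvg_cst | exact: harm_cvg].
have [c0 Hc0] : exists c0 : V, forall y, Y y -> d2 c0 y <= rho ^+ 2.
  apply: (@lim_center Y cf (fun n => 4 * (t n ^+ 2 - rho ^+ 2)) t rho) => //.
  - have -> : (0:R) = 4 * (rho ^+ 2 - rho ^+ 2) by rewrite subrr mulr0.
    apply: cvgMr; apply: cvgB; last exact: cvg_cst.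
    rewrite expr2; under eq_fun do rewrite expr2; exact: cvgM.
  - move=> n m nm.
    have tmn : t m <= t n.
      rewrite /t lerD2l lef_pV2 ?posrE ?ler_nat //.
    have := @midpoint_lemma Y _ _ _ _ _ (ex_intro _ y0 Yy0) (Hcf n) (Hcf m) rho0 rho_le.
    by rewrite max_l.
  - move=> y Yy; apply: nearW => n.
    by have [_ h] := (cballP _ _ _).1 (Hcf n y Yy).
exists c0, rho; split => //; split => // y Yy; apply/cballP; split => //; exact: Hc0.
Qed.


Local Notation leb := (@lebN R N).
Local Notation Sof A := [set s | exists a b : nat -> V,
     A `<=` \bigcup_k box (a k) (b k) /\
     s = (\sum_(0 <= k <oo) (box_vol (a k) (b k))%:E)%E].

Lemma box_vol_ge0 (a b : V) : 0 <= box_vol a b.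
Proof. by apply: prodr_ge0 => i _; rewrite le_max lexx orbT. Qed.

Lemma lebN_ge0 (A : set V) : (0 <= leb A)%E.
Proof.
apply: le_ereal_inf_tmp => _ [a [b [_ ->]]].
by apply: nneseries_ge0 => k _ _; rewrite lee_fin box_vol_ge0.
Qed.

Lemma le_lebN (A B : set V) : A `<=` B -> (leb A <= leb B)%E.
Proof.
move=> AB; apply: ereal_inf_le_tmp => _ [a [b [cov ->]]].
by exists a, b; split => //; apply: subset_trans cov.
Qed.

Lemma lebN_box0 (A : set V) (c : V) : (0 < N)%N -> A `<=` box c c -> leb A = 0%E.
Proof.
move=> N0 Ac; apply/eqP; rewrite eq_le lebN_ge0 andbT.
apply: ereal_inf_lbound; exists (fun=> c), (fun=> c); split.
  by move=> y Ay; exists 0%N => //; exact: Ac.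
rewrite eseries0 // => k _ _.
rewrite /box_vol (bigD1 (Ordinal N0)) //= subrr.
by rewrite (_ : Num.max 0 0 = 0) ?mul0r // maxxx.
Qed.

Lemma box_vol_scale (a b c : V) (r : R) : 0 < r ->
  box_vol (c + r *: a) (c + r *: b) = r ^+ N * box_vol a b.
Proof.
move=> r0; rewrite /box_vol -[in r ^+ N](card_ord N) -prodrMl.
apply: eq_bigr => i _; rewrite !mxE.
have -> : c ord0 i + r * b ord0 i - (c ord0 i + r * a ord0 i) =
  r * (b ord0 i - a ord0 i) by ring.
by rewrite maxr_pMr ?ltW // mulr0.
Qed.

Lemma lebN_scale (A B : set V) (c : V) (r : R) : 0 < r ->
  (forall y, B y -> exists2 x, A x & y = c + r *: x) ->
  (leb B <= (r ^+ N)%:E * leb A)%E.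
Proof.
move=> r0 hBA.
have rN0 : 0 < r ^+ N by exact: exprn_gt0.
have key s : Sof A s -> (leb B <= (r ^+ N)%:E * s)%E.
  move=> [a [b [cov ->]]].
  apply: ereal_inf_lbound.
  exists (fun k => c + r *: a k), (fun k => c + r *: b k); split.
    move=> y By; have [x Ax ->] := hBA y By.
    have [k _ hk] := cov x Ax; exists k => // i.
    have /andP[h1 h2] := hk i; rewrite !mxE.
    by rewrite !lerD2l !ler_pM2l // h1 h2.
  rewrite -nneseriesZl; last by move=> k _; rewrite lee_fin box_vol_ge0.
  by apply: eq_eseriesr => k _; rewrite box_vol_scale.
have : (((r ^+ N)^-1)%:E * leb B <= leb A)%E.
  apply: le_ereal_inf_tmp => s Ss.
  by rewrite lee_pdivrMl //; exact: key.
by rewrite lee_pdivrMl.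
Qed.


Lemma d2_scale (c x z : V) (r : R) : d2 (c + r *: x) (c + r *: z) = r ^+ 2 * d2 x z.
Proof.
rewrite /d2 mulr_sumr; apply: eq_bigr => i _; rewrite !mxE.
have -> : c ord0 i + r * x ord0 i - (c ord0 i + r * z ord0 i) =
  r * (x ord0 i - z ord0 i) by ring.
by rewrite exprMn.
Qed.

Lemma lebN_unit_fin : (0 < N)%N -> (leb (cball 0 1) <= (2 ^+ N)%:E)%E.
Proof.
move=> N0.
pose a k : V := if k == 0%N then - const_mx 1 else 0.
pose b k : V := if k == 0%N then const_mx 1 else 0.
apply: (@le_trans _ _ (\sum_(0 <= k <oo) (box_vol (a k) (b k))%:E)%E).
  apply: ereal_inf_lbound; exists a, b; split => //.
  move=> y /cballP [_ hy]; exists 0%N => // i; rewrite /a /b /= !mxE.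
  have := le_trans (coord_le_d2 0 y i) hy; rewrite mxE sub0r sqrrN expr1n => h.
  by apply/andP; split; nra.
rewrite (nneseries_split 0 1); last by move=> k _; rewrite lee_fin box_vol_ge0.
rewrite eseries0; last first.
  move=> k k1 _; rewrite /a /b; case: eqP => [k0|_]; first by rewrite k0 in k1.
  rewrite /box_vol (bigD1 (Ordinal N0)) //= !mxE subrr.
  by rewrite (_ : Num.max 0 0 = 0) ?mul0r // maxxx.
rewrite adde0 big_nat1 /a /b /= lee_fin /box_vol -[in 2 ^+ N](card_ord N) -prodr_const.
apply: ler_prod => i _; rewrite !mxE opprK max_l //.
by rewrite addr_ge0 //= lexx.
Qed.


Definition Kc := fine (leb (cball 0 1)).

Lemma Kc_ge0 : 0 <= Kc.
Proof. exact: fine_ge0 (lebN_ge0 _). Qed.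

Lemma lebN_unitE : (0 < N)%N -> leb (cball 0 1) = Kc%:E.
Proof.
move=> N0; rewrite /Kc fineK // ge0_fin_numE ?lebN_ge0 //.
exact: le_lt_trans (lebN_unit_fin N0) (ltry _).
Qed.

Lemma lebN_cball (c : V) (r : R) : (0 < N)%N -> 0 <= r ->
  leb (cball c r) = (r ^+ N * Kc)%:E.
Proof.
move=> N0; rewrite le_eqVlt => /orP[/eqP r0|r0].
  rewrite -r0 expr0n gtn_eqF // mul0r.
  apply: (@lebN_box0 _ c) => // y /cballP[_ hy] i.
  have := le_trans (coord_le_d2 c y i) hy; rewrite expr0n /= => h.
  have : c ord0 i - y ord0 i = 0 by apply/eqP; rewrite -sqrf_eq0 eq_le h sqr_ge0.
  by move/eqP; rewrite subr_eq0 => /eqP ->; rewrite lexx.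
have rN0 : 0 < r ^+ N by exact: exprn_gt0.
have h1 : (leb (cball c r) <= (r ^+ N)%:E * leb (cball 0 1))%E.
  apply: lebN_scale => // y /cballP[_ hy].
  exists (r^-1 *: (y - c)).
    apply/cballP; split => //.
    have := d2_scale c 0 (r^-1 *: (y - c)) r.
    have -> : c + r *: 0 = c by rewrite scaler0 addr0.
    have -> : c + r *: (r^-1 *: (y - c)) = y.
      by rewrite scalerA mulfV ?gt_eqF // scale1r addrC subrK.
    move=> e; rewrite expr1n -(@ler_pM2l _ (r ^+ 2)) ?exprn_gt0 // mulr1 -e //.
  by apply/rowP => i; rewrite !mxE; field; rewrite gt_eqF.
have h2 : (leb (cball 0 1) <= ((r^-1) ^+ N)%:E * leb (cball c r))%E.
  apply: (@lebN_scale _ _ (- (r^-1 *: c))); first by rewrite invr_gt0.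
  move=> x /cballP[_ hx]; exists (c + r *: x).
    apply/cballP; split; first exact: ltW.
    have := d2_scale c 0 x r; rewrite scaler0 addr0 => ->.
    by rewrite -[leRHS]mulr1 ler_wpM2l // ?sqr_ge0 // -(expr1n _ 2).
  by apply/rowP => i; rewrite !mxE; field; rewrite gt_eqF.
rewrite lebN_unitE // in h1 h2.
move: h2; rewrite exprVn lee_pdivlMl // => h2.
by apply/le_anti; rewrite h1 /=; rewrite EFinM.
Qed.


Lemma lebN_setT_pos : (0 < N)%N -> 0 < Kc -> leb setT = +oo%E.
Proof.
move=> N0 K0.
have hM (M : R) : (M%:E <= leb setT)%E.
  pose r := 1 + `|M| / Kc.
  have r1 : 1 <= r by rewrite /r lerDl divr_ge0 // ltW.
  have hT : (leb (cball 0 r) <= leb setT)%E by apply: le_lebN.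
  apply: le_trans hT.
  rewrite lebN_cball // ?(le_trans _ r1) // lee_fin.
  apply: (@le_trans _ _ (r * Kc)); last by rewrite ler_wpM2r ?Kc_ge0 // ler_eXnr.
  rewrite /r mulrDl mul1r divfK ?gt_eqF //.
  by apply: le_trans (ler_norm M) _; rewrite lerDr ltW.
case E : (leb setT) => [x||] //.
  by have := hM (x + 1)%R; rewrite E lee_fin => h; exfalso; move: h; apply/negP; rewrite -ltNge ltrDl.
by have := lebN_ge0 setT; rewrite E.
Qed.

Lemma cover_all (y : V) : exists j : nat, cball 0 j%:R y.
Proof.
exists (Num.Def.trunc (d2 0 y)).+1; apply/cballP; split => //.
apply: le_trans (ltW (truncnS_gt _)) _.
by apply: ler_eXnr => //; rewrite ler1n.
Qed.

Lemma lebN_setT_zero : (0 < N)%N -> Kc = 0 -> leb setT = 0%E.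
Proof.
move=> N0 K0; apply/eqP; rewrite eq_le lebN_ge0 andbT.
apply/lee_addgt0Pr => eps eps0; rewrite add0e.
have hj (j : nat) : exists ab : (nat -> V) * (nat -> V),
    cball 0 j%:R `<=` \bigcup_k box (ab.1 k) (ab.2 k) /\
    (\sum_(0 <= k <oo) (box_vol (ab.1 k) (ab.2 k))%:E <=
       (eps / (2 ^ j.+1)%:R)%:E)%E.
  have : (leb (cball 0 j%:R) < (eps / (2 ^ j.+1)%:R)%:E)%E.
    by rewrite lebN_cball // K0 mulr0 lte_fin divr_gt0 // ltr0n expn_gt0.
  move=> /ereal_inf_lt [_ [a [b [cov ->]]] lt].
  by exists (a, b); split => //; exact: ltW.
have [f Hf] := choice hj.
have : ([set: nat] #= [set: nat * nat])%card by apply: card_esym; exact: card_nat2.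
case/pcard_eqP => e.
have ebij : set_bij [set: nat] [set: nat * nat] e by exact: bij.
pose g (p : nat * nat) := (box_vol ((f p.1).1 p.2) ((f p.1).2 p.2))%:E.
have g0 p : (0 <= g p)%E by rewrite lee_fin box_vol_ge0.
apply: (@le_trans _ _ (\sum_(0 <= k <oo) g (e k))%E).
  apply: ereal_inf_lbound.
  exists (fun k => (f (e k).1).1 (e k).2), (fun k => (f (e k).1).2 (e k).2).
  split => // y _.
  have [j hj'] := cover_all y.
  have [i _ hi] := (Hf j).1 y hj'.
  have [k _ ek] := set_bij_surj ebij (I : setT (j, i)).
  by exists k => //; rewrite ek.
rewrite nneseries_esumT // -(@reindex_esum R _ _ setT setT e g ebij).
have -> : [set: nat * nat] = [set: nat] `*`` (fun=> [set: nat]).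
  by apply/seteqP; split => // -[].
rewrite (_ : \esum_(k in _) g k = \esum_(k in [set: nat] `*`` (fun=> [set: nat])) g (k.1, k.2))%E; last by apply: eq_esum => -[].
rewrite -(@esum_esum R _ _ setT (fun=> setT) (fun j i => g (j, i))) //.
apply: (@le_trans _ _ (\sum_(0 <= j <oo) (eps / (2 ^ j.+1)%:R)%:E)%E); last first.
  exact: epsilon_trick0 (ltW eps0).
rewrite nneseries_esumT; last by move=> j; rewrite lee_fin divr_ge0 // ltW.
apply: le_esum => j _.
rewrite -nneseries_esumT //; exact: (Hf j).2.
Qed.


Lemma cvg_exprn (u : nat -> R) (l : R) (n : nat) :
  u @ \oo --> l -> (fun k => u k ^+ n) @ \oo --> l ^+ n.
Proof.
move=> hu; elim: n => [|n IH].
  rewrite expr0; under eq_fun do rewrite expr0; exact: cvg_cst.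
rewrite exprS; under eq_fun do rewrite exprS; exact: cvgM.
Qed.

Local Notation eb := (@enclosing_ball R N).

Lemma eb_set0 : eb set0 = [set 0].
Proof. by rewrite /enclosing_ball; case: pselect. Qed.

Lemma eb_unb (Y : set V) : ~ ebounded Y -> eb Y = setT.
Proof.
move=> nb; rewrite /enclosing_ball; case: pselect => [Y0|_].
  by exfalso; apply: nb; rewrite Y0; exists 0 => x.
by case: pselect.
Qed.

Lemma eb_spec (Y : set V) : (0 < N)%N -> Y !=set0 -> ebounded Y ->
  exists r : R, [/\ 0 <= r, (exists c, Y `<=` cball c r),
    (forall c' r', 0 <= r' -> Y `<=` cball c' r' -> r <= r') &
    leb (eb Y) = (r ^+ N * Kc)%:E].
Proof.
move=> N0 Yne Yb.
have [c [r [r0 [Yc rmin]]]] := @min_ball_ex Y Yne Yb.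
have ex : exists B, is_min_ball Y B by exists (cball c r), c, r.
rewrite /enclosing_ball; case: pselect => [Y0|_].
  by case: Yne => y; rewrite Y0.
case: pselect => // _.
have [c' [r' [r'0 [-> [Yc' r'min]]]]] := xgetPex setT ex.
exists r'; split => //; first by exists c'.
by rewrite lebN_cball.
Qed.

Lemma meas_set0 : (0 < N)%N -> leb (eb set0) = 0%E.
Proof.
move=> N0; rewrite eb_set0; apply: (@lebN_box0 _ 0) => // y -> i.
by rewrite lexx.
Qed.

Lemma meas_mono (Y Z : set V) : (0 < N)%N -> Y `<=` Z -> (leb (eb Y) <= leb (eb Z))%E.
Proof.
move=> N0 YZ.
case: (pselect (Y = set0)) => [->|Y0].
  by rewrite meas_set0 //; exact: lebN_ge0.
have Yne : Y !=set0 by apply/set0P/eqP.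
case: (pselect (ebounded Z)) => [Zb|Znb]; last first.
  by rewrite (@eb_unb Z Znb); apply: le_lebN.
have Yb : ebounded Y by case: Zb => M hM; exists M => x /YZ /hM.
have Zne : Z !=set0 by case: Yne => y /YZ; exists y.
have [rY [rY0 _ rYmin ->]] := @eb_spec Y N0 Yne Yb.
have [rZ [rZ0 [cZ hZ] _ ->]] := @eb_spec Z N0 Zne Zb.
rewrite lee_fin ler_wpM2r ?Kc_ge0 // lerXn2r ?nnegrE //.
by apply: rYmin => //; apply: subset_trans hZ.
Qed.

Lemma lebN_N0 (A : set V) : N = 0%N -> leb A = leb setT.
Proof.
move=> N0; rewrite /lebN; congr ereal_inf; apply/seteqP; split.
  move=> _ [a [b [_ ->]]]; exists a, b; split => // y _; exists 0%N => // i.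
  by exfalso; move: (ltn_ord i); rewrite {2}N0.
move=> _ [a [b [_ ->]]]; exists a, b; split => // y _; exists 0%N => // i.
by exfalso; move: (ltn_ord i); rewrite {2}N0.
Qed.


Lemma sup_pinfty (F : nat -> \bar R) :
  (forall M : R, exists n, (M%:E <= F n)%E) -> ereal_sup (range F) = +oo%E.
Proof.
move=> hF.
have hM (M : R) : (M%:E <= ereal_sup (range F))%E.
  have [n hn] := hF M; apply: le_trans hn _; apply: ereal_sup_ubound; by exists n.
case E : (ereal_sup (range F)) => [x||] //.
  by have := hM (x + 1)%R; rewrite E lee_fin => h; exfalso; move: h; apply/negP; rewrite -ltNge ltrDl.
by have := hM 0%R; rewrite E.
Qed.

Lemma main_pos (X : nat -> set V) : (0 < N)%N -> (forall n, X n `<=` X n.+1) ->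
  leb (eb (\bigcup_n X n)) = ereal_sup (range (fun n => leb (eb (X n)))).
Proof.
move=> N0 hX.
have Xmono n k : (n <= k)%N -> X n `<=` X k.
  move=> /subnK <-; elim: (k - n)%N => // d IH; rewrite addSn.
  exact: subset_trans IH (hX _).
set U := \bigcup_n X n.
set m := fun n => leb (eb (X n)).
set S := ereal_sup (range m).
have sup_ge n : (m n <= S)%E by apply: ereal_sup_ubound; exists n.
apply/le_anti/andP; split; last first.
  apply: ge_ereal_sup => _ [n _ <-]; apply: meas_mono => //.
  by move=> y Xy; exists n.
case: (pselect (U = set0)) => [U0|Un0].
  by rewrite U0 meas_set0 //; apply: le_trans (lebN_ge0 _) (sup_ge 0%N).
have Une : U !=set0 by apply/set0P/eqP.
have [x0 [n0 _ Xx0]] := Une.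
case: (pselect (ebounded U)) => [Ub|Unb].
  pose Z k := X (k + n0)%N.
  have ZU k : Z k `<=` U by move=> y Zy; exists (k + n0)%N.
  have Zne k : Z k !=set0 by exists x0; apply: (Xmono n0) => //; rewrite leq_addl.
  have Zb k : ebounded (Z k) by case: Ub => M hM; exists M => y /ZU /hM.
  have hk k : exists p : V * R, [/\ 0 <= p.2, Z k `<=` cball p.1 p.2,
      (forall c' r', 0 <= r' -> Z k `<=` cball c' r' -> p.2 <= r') &
      m (k + n0)%N = (p.2 ^+ N * Kc)%:E].
    have [r [r0 [c hc] rmin me]] := @eb_spec (Z k) N0 (Zne k) (Zb k).
    by exists (c, r).
  have [F HF] := choice hk.
  pose c k := (F k).1; pose r k := (F k).2.
  have [rho [rho0 [cU hU] rhomin ->]] := @eb_spec U N0 Une Ub.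
  have r_le k : r k <= rho.
    by have [_ _ hmin _] := HF k; apply: hmin => //; apply: subset_trans hU.
  have r_mono k k' : (k <= k')%N -> r k <= r k'.
    move=> kk'; have [_ _ hmin _] := HF k; have [r'0 hk' _ _] := HF k'.
    apply: hmin => //; apply: subset_trans hk'.
    by apply: Xmono; rewrite leq_add2r.
  have r0 k : 0 <= r k by have [] := HF k.
  have hsup : has_sup (range r) by split; [exists (r 0%N), 0%N | exists rho => _ [k _ <-]].
  pose s := sup (range r).
  have r_s k : r k <= s by apply: sup_upper_bound => //; exists k.
  have rcv : r @ \oo --> s.
    apply: nondecreasing_cvgn; first by move=> ? ? ?; exact: r_mono.
    by exists rho => _ [k _ <-].
  have s0 : 0 <= s by apply: le_trans (r_s 0%N).
  have [c0 Hc0] : exists c0 : V, forall y, U y -> d2 c0 y <= s ^+ 2.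
    apply: (@lim_center U c (fun k => 4 * (s ^+ 2 - r k ^+ 2)) r s) => //.
    - have -> : (0:R) = 4 * (s ^+ 2 - s ^+ 2) by rewrite subrr mulr0.
      apply: cvgMr; apply: cvgB; first exact: cvg_cst.
      exact: cvg_exprn.
    - move=> k k' kk'.
      have [_ hk1 hmin _] := HF k; have [_ hk2 _ _] := HF k'.
      have hk2' : Z k `<=` cball (c k') (r k').
        apply: subset_trans hk2; apply: Xmono; by rewrite leq_add2r.
      have := @midpoint_lemma (Z k) (c k) (c k') (r k) (r k') (r k) (Zne k) hk1 hk2' (r0 k) hmin.
      rewrite max_r ?r_mono // => h; apply: le_trans h _.
      by rewrite ler_pM2l // lerD2r ler_sqr ?nnegrE.
    - move=> y [n _ Xy]; exists n => // k /= nk.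
      have [_ hk1 _ _] := HF k.
      have : Z k y by apply: (Xmono n) => //; apply: leq_trans nk (leq_addr _ _).
      by move/hk1 => /cballP[].
  have rho_s : rho <= s.
    apply: rhomin => // y Uy; apply/cballP; split => //; exact: Hc0.
  have S0 : (0 <= S)%E by apply: le_trans (lebN_ge0 _) (sup_ge 0%N).
  case ES : S S0 sup_ge => [sig||] // _ sge; last by rewrite leey.
  rewrite lee_fin.
  apply: (@le_trans _ _ (s ^+ N * Kc)).
    by rewrite ler_wpM2r ?Kc_ge0 // lerXn2r ?nnegrE.
  have hc1 : (fun k => r k ^+ N * Kc) @ \oo --> s ^+ N * Kc.
    by apply: cvgMl; exact: cvg_exprn.
  have hc2 : (fun _ : nat => sig) @ \oo --> sig by exact: cvg_cst.
  apply: (ler_cvg_to hc1 hc2).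
  apply: nearW => k.
  have := sge (k + n0)%N; have [_ _ _ ->] := HF k; by rewrite lee_fin.
rewrite (@eb_unb U Unb).
case: (pselect (exists n, ~ ebounded (X n))) => [[n nb]|allb].
  by have := sup_ge n; rewrite /m (@eb_unb (X n) nb).
have Xb n : ebounded (X n) by apply: contra_notP allb => nb; exists n.
have [K0|Kpos] : Kc = 0 \/ 0 < Kc.
  by have := Kc_ge0; rewrite le_eqVlt => /orP[/eqP <-|]; [left|right].
  by rewrite lebN_setT_zero //; apply: le_trans (lebN_ge0 _) (sup_ge 0%N).
rewrite lebN_setT_pos // /S sup_pinfty // => M.
apply: contrapT => hno.
have hlt n : (m n < M%:E)%E.
  by rewrite ltNge; apply/negP => h; apply: hno; exists n.
pose B := 1 + `|M| / Kc.
have B1 : 1 <= B by rewrite /B lerDl divr_ge0 // ltW.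
have rad_le n : X n !=set0 -> exists c, X n `<=` cball c B.
  move=> Xne; have [r [r0 [c hc] _ me]] := @eb_spec (X n) N0 Xne (Xb n).
  exists c => y /hc /cballP [_ h]; apply/cballP; split; first exact: le_trans B1.
  have B0 : 0 <= B by apply: le_trans B1.
  apply: le_trans h _; rewrite ler_sqr ?nnegrE //.
  rewrite leNgt; apply/negP => Br.
  have := hlt n; rewrite /m me lte_fin => hM.
  have : B * Kc < r ^+ N * Kc.
    rewrite ltr_pM2r //; apply: (lt_le_trans Br); apply: ler_eXnr => //.
    exact: le_trans B1 (ltW Br).
  rewrite /B mulrDl mul1r divfK ?gt_eqF // => h2.
  have := ler_norm M; lra.
apply: Unb.
exists (Num.sqrt (2 * d2 0 x0 + 8 * B ^+ 2)) => y [k _ Xy].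
have Xne : X (maxn n0 k) !=set0 by exists y; apply: (Xmono k) => //; exact: leq_maxr.
have [c hc] := rad_le _ Xne.
have /cballP[_ h1] := hc x0 (Xmono n0 _ (leq_maxl _ _) _ Xx0).
have /cballP[_ h2] := hc y (Xmono k _ (leq_maxr _ _) _ Xy).
change (Num.sqrt (d2 0 y) <= Num.sqrt (2 * d2 0 x0 + 8 * B ^+ 2)).
rewrite ler_sqrt; last by rewrite addr_ge0 // mulr_ge0 ?d2_ge0 ?sqr_ge0.
have q1 := d2_quasi 0 x0 y.
have q2 := d2_quasi x0 c y.
rewrite d2C in h1.
lra.
Qed.

End Geo.

Theorem lemma9 (R : realType) (N : nat) (X : nat -> set 'rV[R]_N)
  (hX : forall n, X n `<=` X n.+1) :
  (fun n => lebN (enclosing_ball (X n))) @ \oo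
     --> lebN (enclosing_ball (\bigcup_n X n)) /\
  lebN (enclosing_ball (\bigcup_n X n)) =
     ereal_sup (range (fun n => lebN (enclosing_ball (X n)))).
Proof.
case: (posnP N) => [N0|Npos].
  have E : (fun n => lebN (enclosing_ball (X n))) = cst (lebN [set: 'rV[R]_N]).
    by apply/funext => n; exact: (@lebN_N0 R N _ N0).
  rewrite E (@lebN_N0 R N _ N0); split; first exact: cvg_cst.
  by rewrite ereal_sup_cst // setT0.
have H := @main_pos R N X Npos hX.
split; last exact: H.
rewrite H; apply: ereal_nondecreasing_cvgn.
move=> n k nk; apply: (@meas_mono R N) => //.
move: nk => /subnK <-; elim: (k - n)%N => // d IH; rewrite addSn.
exact: subset_trans IH (hX _).
Qed.
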